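(* Let $t\in\mathbb{N}$ and let $C_1=C_1(t)$ be a constant with the property described in the context. Then there exists a constant $C_2=C_2(t)$ such that for all $\alpha_1,\ldots,\alpha_t\in\mathbb{T}$, all positive $\varepsilon\le 1/C_1(t)$, all positive $r\le 1$ and all positive integers $N$ and $U$, there is a nonempty finite set $S$ of integers satisfying (i) $U<\min S$; (ii) for all $j\le t$: $\sum_{n\in S}\|n\alpha_j\|^r\le C_2\,\dfrac{\varepsilon^r}{2^r-1}$; (iii) for all $\beta\in\mathbb{T}$: $\min\{1/6,\ \|\beta H_{N,\varepsilon}(\alpha_1,\ldots,\alpha_t)\|\}\le\|\beta S\|$.
   Context: $\mathbb{T}=\mathbb{R}/\mathbb{Z}$; $\|x\|$ is the distance from $x$ to the nearest integer. $H_{N,\varepsilon}(\alpha_1,\ldots,\alpha_t)=\{n\in\mathbb{N}, n\le N: \|n\alpha_1\|,\ldots,\|n\alpha_t\|\le\varepsilon\}$. For $\beta\in\mathbb{T}$ and a set $S$ of integers, $\|\beta S\|=\sup\{\|n\beta\|: n\in S\}$. The constant $C_1(t)$ (which exists by a result of Bir\'o and S\'os) has the property: for all $\alpha_1,\ldots,\alpha_t\in\mathbb{T}$, all positive $\varepsilon\le 1/C_1$ and all positive integers $N$ there exist $R\le C_1$, nonzero integers $n_1,\ldots,n_R$ and positive integers $K_1,\ldots,K_R$ such that (a) $\sum_{i=1}^R K_i\|n_i\alpha_j\|\le C_1\varepsilon$ for $1\le j\le t$; (b) $\sum_{i=1}^R K_i|n_i|\le C_1 N$; (c) $H_{N,\varepsilon}(\alpha_1,\ldots,\alpha_t)\subseteq\{\sum_{i=1}^R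 k_in_i: 1\le k_i\le K_i\}$. *)

(* Defs.v *)
From HB Require Import structures.
From mathcomp Require Import all_boot all_order all_algebra.
From mathcomp Require Import reals exp.
Set Implicit Arguments. Unset Strict Implicit. Unset Printing Implicit Defensive.
Import Order.TTheory GRing.Theory Num.Theory.
Local Open Scope ring_scope.

(* Elements of T = R/Z are represented by real numbers; all notions below
   only depend on the class mod 1. *)

Definition distZ (R : realType) (x : R) : R :=
  Num.min (x - (Num.floor x)%:~R) ((Num.floor x)%:~R + 1 - x).

Definition nrm (R : realType) (n : int) (a : R) : R := distZ (n%:~R * a).

(* H_{N,eps}(alpha_1..alpha_t) = {n in N, 1 <= n <= N : ||n alpha_j|| <= eps for all j},
   as a duplicate-free list of integers. *)
Definition Hset (R : realType) (t : nat) (alpha : 'I_t -> R) (N : nat) (eps : R)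
  : seq int :=
  [seq (n%:Z) | n <- iota 1 N & [forall j : 'I_t, nrm (n%:Z) (alpha j) <= eps]].

(* ||beta S|| = sup {||n beta|| : n in S} for a finite set S (sup of the empty set = 0,
   the natural value since all norms are >= 0) *)
Definition nrmset (R : realType) (beta : R) (S : seq int) : R :=
  \big[Num.max/0]_(n <- S) nrm n beta.

Definition BiroSos_prop (R : realType) (t : nat) (C1 : R) : Prop :=
  forall (alpha : 'I_t -> R) (eps : R) (N : nat),
    0 < eps -> eps <= 1 / C1 -> (0 < N)%N ->
    exists (Rn : nat) (n : 'I_Rn -> int) (K : 'I_Rn -> nat),
      [/\ Rn%:R <= C1,
          (forall i, n i != 0 /\ (0 < K i)%N),
          (forall j : 'I_t, \sum_(i < Rn) (K i)%:R * nrm (n i) (alpha j) <= C1 * eps),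
          \sum_(i < Rn) (K i)%:R * `|n i|%:~R <= C1 * N%:R
        & forall m, m \in Hset alpha N eps ->
            exists k : 'I_Rn -> nat,
              (forall i, (1 <= k i <= K i)%N) /\ m = \sum_(i < Rn) (k i)%:Z * n i].

(* Main.v *)
Require Import Defs.
From HB Require Import structures.
From mathcomp Require Import all_boot all_order all_algebra.
From mathcomp Require Import reals exp.
From mathcomp Require Import ring lra zify.
From Stdlib Require Import Classical.
Import Order.TTheory GRing.Theory Num.Theory.
Local Open Scope ring_scope.
Set Implicit Arguments. Unset Strict Implicit. Unset Printing Implicit Defensive.


Section D.
Variable R : realType.
Implicit Types x y : R.

Lemma intrD1 (f : int) : ((f+1)%:~R : R) = f%:~R + 1.
Proof. by rewrite intrD. Qed.

Lemma distZ_le x (z : int) : distZ x <= `|x - z%:~R|.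
Proof.
rewrite /distZ; have := floor_itv x; set f := Num.floor x => /andP[h1 h2].
rewrite intrD1 in h2.
case: (lerP z f) => hz.
  have : (z%:~R : R) <= f%:~R by rewrite ler_int.
  move=> hzf; rewrite ger0_norm ?subr_ge0; last by lra.
  rewrite ge_min; apply/orP; left; lra.
have : (f + 1)%:~R <= (z%:~R : R) by rewrite ler_int lezD1.
rewrite intrD1 => hzf; rewrite ler0_norm ?subr_le0; last by lra.
rewrite ge_min; apply/orP; right; lra.
Qed.

Lemma distZ_ex x : exists z : int, distZ x = `|x - z%:~R|.
Proof.
rewrite /distZ; have := floor_itv x; set f := Num.floor x => /andP[h1 h2].
rewrite intrD1 in h2.
case: (leP (x - f%:~R) (f%:~R + 1 - x)) => h.
  exists f; rewrite ger0_norm //; lra.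
exists (f + 1); rewrite intrD1 ler0_norm; lra.
Qed.

Lemma distZ_ge0 x : 0 <= distZ x.
Proof. by have [z ->] := distZ_ex x. Qed.

Lemma distZ_leP x c : (exists z : int, `|x - z%:~R| <= c) -> distZ x <= c.
Proof. by case=> z h; apply: le_trans (distZ_le x z) h. Qed.

Lemma distZD x y : distZ (x + y) <= distZ x + distZ y.
Proof.
have [zx ->] := distZ_ex x; have [zy ->] := distZ_ex y.
apply: distZ_leP; exists (zx + zy); rewrite intrD.
have -> : x + y - (zx%:~R + zy%:~R) = (x - zx%:~R) + (y - zy%:~R) by ring.
exact: ler_normD.
Qed.

Lemma distZN x : distZ (- x) = distZ x.
Proof.
apply/eqP; rewrite eq_le; apply/andP; split.
  have [z ->] := distZ_ex x; apply: distZ_leP; exists (- z).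
  by rewrite intrN -opprD normrN.
have [z ->] := distZ_ex (- x); apply: distZ_leP; exists (- z).
by rewrite intrN -normrN opprD opprK.
Qed.

Lemma distZB x y : distZ (x - y) <= distZ x + distZ y.
Proof. by rewrite -(distZN y); apply: distZD. Qed.

Lemma distZM (k : int) x : distZ (k%:~R * x) <= `|k|%:~R * distZ x.
Proof.
have [z ->] := distZ_ex x; apply: distZ_leP; exists (k * z).
rewrite intrM -mulrBr normrM; rewrite -intr_norm //.
Qed.

Lemma int_small (m : int) : `|(m%:~R : R)| < 1 -> m = 0.
Proof.
move=> h; have : `|m| < 1 :> int.
  by rewrite -(ltr_int R) intr_norm.
move=> {}h; apply/eqP; rewrite -normr_eq0 eq_le normr_ge0 andbT.
by rewrite -(add0r 1) ltzD1 in h.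
Qed.

Lemma distZ_half x e : distZ x < 1/3 -> distZ (2 * x) <= e -> e < 1/3 ->
  distZ x <= e / 2.
Proof.
have [z ->] := distZ_ex x; have [w ->] := distZ_ex (2 * x) => h1 h2 h3.
have : `|((2 * z - w)%:~R : R)| < 1.
  rewrite intrB intrM.
  have -> : (2%:~R * z%:~R - w%:~R : R) = (2 * x - w%:~R) - 2 * (x - z%:~R).
    by rewrite [(2%:~R : R)]/= ; ring.
  apply: le_lt_trans (ler_normB _ _) _; rewrite normrM ger0_norm //; lra.
move/int_small => /eqP; rewrite subr_eq0 => /eqP hw.
have : `|2 * x - w%:~R| = 2 * `|x - z%:~R|.
  have -> : 2 * x - w%:~R = 2 * (x - z%:~R).
    by rewrite -hw intrM; ring.
  by rewrite normrM ger0_norm.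
lra.
Qed.

End D.


Section E.
Variable R : realType.
Implicit Types x y : R.

Lemma distZ_dyadic x d (L : nat) : 0 <= d -> d < 1/6 ->
  (forall l, (l <= L)%N -> distZ ((2^l)%:R * x) <= 2 * d) ->
  distZ x <= 2 * d / (2^L)%:R.
Proof.
move=> d0 d6 h.
suff H : forall j, (j <= L)%N -> distZ ((2^(L - j))%:R * x) <= 2 * d / (2^j)%:R.
  by have := H L (leqnn L); rewrite subnn expn0 mul1r.
elim=> [_|j IH hj].
  by rewrite subn0 expn0 divr1; apply: h.
have hj' : (j <= L)%N by lia.
have IH' := IH hj'.
have eL: (L - j = (L - j.+1).+1)%N by lia.
rewrite eL expnS natrM -mulrA in IH'.
have p2 : (0 : R) < (2^j)%:R by rewrite ltr0n expn_gt0.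
have hle : 2 * d / (2^j)%:R <= 2 * d.
  rewrite ler_pdivrMr // ler_peMr //; first lra.
  by rewrite ler1n expn_gt0.
have := distZ_half (x := (2 ^ (L - j.+1))%:R * x) (e := 2 * d / (2^j)%:R).
rewrite expnS natrM.
have -> : 2 * d / (2 * (2 ^ j)%:R) = 2 * d / (2^j)%:R / 2.
  by field; rewrite gt_eqF.
apply.
- by apply: le_lt_trans (h _ _) _; [lia | lra].
- exact: IH'.
- lra.
Qed.

End E.


Section F.
Variable R : realType.
Implicit Types x y : R.

Definition fr x : R := x - (Num.floor x)%:~R.

Lemma fr_ge0 x : 0 <= fr x.
Proof. by rewrite /fr subr_ge0 floor_le. Qed.
Lemma fr_lt1 x : fr x < 1.
Proof. by have := floorD1_gt x; rewrite intrD1 /fr; lra. Qed.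

Lemma box_lt (n : nat) x : (0 < n)%N -> (`|Num.floor (n%:R * fr x)|%N < n)%N.
Proof.
move=> n0; have h0 : 0 <= n%:R * fr x by rewrite mulr_ge0 ?fr_ge0.
have h1 : n%:R * fr x < n%:R.
  by rewrite -[X in _ < X]mulr1 ltr_pM2l ?fr_lt1 // ltr0n.
have f0 : (0 <= Num.floor (n%:R * fr x)) by rewrite floor_ge0.
have : (Num.floor (n%:R * fr x)) < n%:Z.
  by rewrite floor_lt_int.
move: f0; case: (Num.floor _) => // m _; rewrite ltz_nat //.
Qed.

Lemma box_close (n : nat) x y : (0 < n)%N ->
  Num.floor (n%:R * x) = Num.floor (n%:R * y) -> `|x - y| < 1 / n%:R.
Proof.
move=> n0 e; have := floor_itv (n%:R * x); have := floor_itv (n%:R * y).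
rewrite e !intrD1 => /andP[a1 a2] /andP[b1 b2].
have np : (0 : R) < n%:R by rewrite ltr0n.
rewrite ltr_pdivlMr //.
have -> : `|x - y| * n%:R = `|n%:R * x - n%:R * y|.
  by rewrite -mulrBr normrM (gtr0_norm np) mulrC.
rewrite ltr_norml; apply/andP; split; lra.
Qed.

Lemma dirichlet t (alpha : 'I_t -> R) (eta : R) (B : nat) : 0 < eta ->
  exists M : nat, (B < M)%N /\ forall j, distZ (M%:R * alpha j) <= eta.
Proof.
move=> eta0.
pose Q := `|Num.floor (eta^-1)|%N.
have hQ : eta^-1 < Q.+1%:R.
  have f0 : 0 <= Num.floor (eta^-1) by rewrite floor_ge0 invr_ge0 ltW.
  rewrite -addn1 natrD /Q natr_absz ger0_norm //.
  by have := floorD1_gt (eta^-1); rewrite intrD1.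
have hn : 1 / Q.+1%:R < eta.
  by rewrite ltr_pdivrMr ?ltr0n // -ltr_pdivrMl // mulr1.
pose n := Q.+1.
pose y (k : nat) j := (k * B.+1)%:R * alpha j.
pose F (k : 'I_(n ^ t).+1) : {ffun 'I_t -> 'I_n} :=
  [ffun j => inord (`|Num.floor (n%:R * fr (y k j))|%N)].
have : ~~ injectiveb F.
  apply/negP => /injectiveP inj; have := leq_card F inj.
  by rewrite card_ffun !card_ord ltnn.
case/injectivePn => k1 [k2 nk ek].
wlog lt12 : k1 k2 nk ek / (k1 < k2)%N.
  move=> W; case: (ltngtP k1 k2) => c.
  - exact: (W k1 k2 nk ek c).
  - by apply: (W k2 k1 _ (esym ek) c); rewrite eq_sym.
  by move: nk; rewrite -(inj_eq val_inj) /= c eqxx.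
exists ((k2 - k1) * B.+1)%N; split.
  have : (0 < k2 - k1)%N by lia.
  by case: (k2 - k1)%N => // m _; rewrite mulSn; lia.
move=> j.
have eb : Num.floor (n%:R * fr (y k1 j)) = Num.floor (n%:R * fr (y k2 j)).
  have := congr1 (fun f : {ffun 'I_t -> 'I_n} => val (f j)) ek.
  rewrite /= !ffunE /= !inordK ?box_lt // => e.
  rewrite -[LHS]gez0_abs ?floor_ge0 ?mulr_ge0 ?fr_ge0 //.
  by rewrite -[RHS]gez0_abs ?floor_ge0 ?mulr_ge0 ?fr_ge0 // e.
have := box_close (ltn0Sn Q) eb => hc.
apply: distZ_leP; exists (Num.floor (y k2 j) - Num.floor (y k1 j)).
apply: le_trans (ltW (lt_trans hc hn)).
rewrite distrC le_eqVlt; apply/orP; left; apply/eqP; congr `|_|.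
rewrite /fr /y intrB mulnBl natrB; last by rewrite leq_mul2r; lia.
ring.
Qed.

End F.


Section G.
Variable R : realType.
Implicit Types x y a b c r : R.

Lemma powR_mono r x y : 0 < r -> 0 <= x -> x <= y -> x `^ r <= y `^ r.
Proof.
move=> r0 x0 xy; apply: (ge0_ler_powR (ltW r0)) => //; rewrite nnegrE //.
exact: le_trans xy.
Qed.

Lemma powR_sum2 r x a b : 0 < r -> r <= 1 -> 0 <= x -> 0 <= a -> 0 <= b ->
  x <= a + b -> x `^ r <= 2 * (a `^ r + b `^ r).
Proof.
move=> r0 r1 x0 a0 b0 xab.
have h2 : (2 : R) `^ r <= 2 by apply: ler1_powR r1; lra.
wlog ab : a b a0 b0 xab / b <= a.
  move=> W; case: (leP b a) => c; first exact: W.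
  by rewrite addrC; apply: W => //; [rewrite addrC | apply: ltW].
have : x `^ r <= (2 * a) `^ r by apply: powR_mono => //; lra.
rewrite powRM //.
have := powR_ge0 a r; have := powR_ge0 b r; have := powR_ge0 2 r.
move=> p1 p2 p3 h.
apply: le_trans h _.
have : 2 `^ r * a `^ r <= 2 * a `^ r by apply: ler_wpM2r.
have : 0 <= 2 * b `^ r by lra.
lra.
Qed.

Lemma powR_le1p r x : 0 < r -> r <= 1 -> 0 <= x -> x `^ r <= 1 + x.
Proof.
move=> r0 r1 x0; case: (leP x 1) => c.
  have := powR_mono r0 x0 c; rewrite powR1 => h; lra.
have := ler1_powR (ltW c) r1; lra.
Qed.

Lemma two_powR_gt1 r : 0 < r -> 1 < (2 : R) `^ r.
Proof.
move=> r0; rewrite /powR (negbTE (_ : (2:R) != 0)) ?expR_gt1; last by lra.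
by rewrite mulr_gt0 // ln_gt0 //; lra.
Qed.

Lemma powR_natX r (l : nat) : ((2 ^ l)%:R : R) `^ r = ((2 : R) `^ r) ^+ l.
Proof.
rewrite natrX -powR_mulrn ?ler0n // -powRrM mulrC powRrM powR_mulrn //.
exact: powR_ge0.
Qed.

Lemma geom_powR r c (L : nat) : 0 < r -> 0 <= c ->
  \sum_(l < L.+1) ((2 ^ l)%:R * c) `^ r <=
     ((2 ^ L.+1)%:R * c) `^ r / ((2 : R) `^ r - 1).
Proof.
move=> r0 c0.
have q1 := two_powR_gt1 r0.
set q := (2 : R) `^ r in q1 *.
have e : forall l : nat, ((2 ^ l)%:R * c) `^ r = c `^ r * q ^+ l.
  by move=> l; rewrite powRM ?ler0n // powR_natX mulrC.
under eq_bigr do rewrite e.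
rewrite -mulr_sumr e.
have hs : \sum_(i < L.+1) q ^+ i = (q ^+ L.+1 - 1) / (q - 1).
  rewrite subrX1 [X in _ = X]mulrC mulKf //; apply: lt0r_neq0; lra.
rewrite hs mulrA ler_pdivlMr; last lra.
rewrite divfK; last by apply: lt0r_neq0; lra.
have := powR_ge0 c r; nra.
Qed.

End G.


Section H.
Variable R : realType.

Lemma nrmset_ge0 (b : R) s : 0 <= nrmset b s.
Proof.
rewrite /nrmset; elim: s => [|x s IH]; first by rewrite big_nil.
by rewrite big_cons le_max IH orbT.
Qed.

Lemma nrmset_ub (b : R) s n : n \in s -> nrm n b <= nrmset b s.
Proof.
rewrite /nrmset; elim: s => [//|x s IH]; rewrite in_cons big_cons le_max.
case/orP => [/eqP -> | h]; first by rewrite lexx.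
by rewrite IH ?orbT.
Qed.

Lemma nrmset_le (b c : R) s : 0 <= c -> (forall n, n \in s -> nrm n b <= c) ->
  nrmset b s <= c.
Proof.
rewrite /nrmset => c0; elim: s => [|x s IH] h; first by rewrite big_nil.
rewrite big_cons ge_max h ?mem_head //= IH // => n ns.
by apply: h; rewrite in_cons ns orbT.
Qed.

Lemma sum_undup (T : eqType) (s : seq T) (f : T -> R) :
  (forall x, 0 <= f x) -> \sum_(x <- undup s) f x <= \sum_(x <- s) f x.
Proof.
move=> f0; elim: s => [//|x s IH] /=.
case: ifP => _; rewrite !big_cons.
  by apply: le_trans IH _; rewrite lerDr.
by rewrite lerD2l.
Qed.

Lemma distZ_sum (I : Type) (s : seq I) (F : I -> R) :
  distZ (\sum_(i <- s) F i) <= \sum_(i <- s) distZ (F i).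
Proof.
elim: s => [|x s IH]; first by rewrite !big_nil /distZ floor0 /= subr0 add0r ge_min lexx.
rewrite !big_cons; apply: le_trans (distZD _ _) _; by rewrite lerD2l.
Qed.

End H.

Lemma nrm_shift (R : realType) (M : int) (p : nat) (m : int) (x : R) :
  nrm (M + p%:Z * m) x <= nrm M x + p%:R * nrm m x.
Proof.
rewrite /nrm intrD mulrDl intrM -mulrA.
apply: le_trans (distZD _ _) _; rewrite lerD2l.
by apply: le_trans (distZM _ _) _; rewrite ger0_norm.
Qed.

Lemma nrm_ge0 (R : realType) (m : int) (x : R) : 0 <= nrm m x.
Proof. exact: distZ_ge0. Qed.

Lemma aux8 (a Rn b : nat) : (a <= 2 * (2 * Rn * b))%N -> (2 * a <= 8 * Rn * b)%N.
Proof. lia. Qed.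

Unset Implicit Arguments.

Theorem lemma7 (R : realType) (t : nat) (C1 : R) :
  BiroSos_prop t C1 ->
  exists C2 : R,
    forall (alpha : 'I_t -> R) (eps r : R) (N U : nat),
      0 < eps -> eps <= 1 / C1 -> 0 < r -> r <= 1 -> (0 < N)%N -> (0 < U)%N ->
      exists S : seq int,
        [/\ S != [::], uniq S,
            (forall n, n \in S -> U%:Z < n),
            (forall j : 'I_t,
               \sum_(n <- S) (nrm n (alpha j)) `^ r
                 <= C2 * (eps `^ r / ((2 : R) `^ r - 1)))
          & forall beta : R,
              Num.min (1 / 6) (nrmset beta (Hset alpha N eps)) <= nrmset beta S].
Proof.
move=> hBS; exists (2 + 2 * `|C1| * (1 + 8 * C1 ^+ 2)).
move=> alpha eps r N U he heC hr0 hr1 hN hU.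
have C1p : 0 < C1.
  by move: (lt_le_trans he heC); rewrite div1r invr_gt0.
rewrite (gtr0_norm C1p).
have [Rn [n [K [hR hnK hsa hsN hH]]]] := hBS alpha eps N he heC hN.
pose L (i : 'I_Rn) := (trunc_log 2 (2 * Rn * K i)).+1.
have hL1 : forall i, (2 * Rn * K i < 2 ^ L i)%N.
  by move=> i; apply: trunc_log_ltn.
have hL2 : forall i, (2 ^ L i <= 2 * (2 * Rn * K i))%N.
  move=> i; rewrite /L expnS leq_mul2l /=; apply: trunc_logP => //.
  have := ltn_ord i; have := (hnK i).2; rewrite !muln_gt0; lia.
pose B := (U + \sum_(i < Rn) 2 ^ L i * `|n i|)%N.
pose sz : R := (1 + 2 * \sum_(i < Rn) (L i).+1)%N%:R.
have sz0 : 0 < sz by rewrite ltr0n; lia.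
pose eta := eps * (sz^-1) `^ (r^-1).
have eta0 : 0 < eta by rewrite mulr_gt0 // powR_gt0 // invr_gt0.
have etar : eta `^ r = eps `^ r / sz.
  rewrite powRM; [|exact: ltW|exact: powR_ge0].
  rewrite -powRrM mulVf ?gt_eqF // powRr1 //.
  by rewrite invr_ge0 ltW.
have [M [hMB hMa]] := dirichlet alpha B eta0.
pose s0 := M%:Z :: flatten [seq [seq M%:Z + (2 ^ l)%:Z * n i | l <- index_iota 0 (L i).+1]
                            | i <- enum 'I_Rn].
have s0P : forall x, x \in s0 ->
    x = M%:Z \/ exists i l, (l <= L i)%N /\ x = M%:Z + (2 ^ l)%:Z * n i.
  move=> x; rewrite in_cons => /orP [/eqP -> | ]; first by left.
  case/flattenP => s1 /mapP [i _ ->] /mapP [l hl ->]; right; exists i, l.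
  by move: hl; rewrite mem_index_iota.
have s0M : M%:Z \in s0 by rewrite mem_head.
have s0i : forall i l, (l <= L i)%N -> M%:Z + (2 ^ l)%:Z * n i \in s0.
  move=> i l hl; rewrite in_cons; apply/orP; right; apply/flattenP.
  exists [seq M%:Z + (2 ^ l0)%:Z * n i | l0 <- index_iota 0 (L i).+1].
    by apply/mapP; exists i; rewrite ?mem_enum.
  by apply/mapP; exists l; rewrite ?mem_index_iota.
exists (undup s0); split.
- by apply/negP => /eqP e; move: s0M; rewrite -mem_undup e.
- exact: undup_uniq.
- move=> x; rewrite mem_undup => /s0P [->|[i [l [hl ->]]]].
    by rewrite ltz_nat; move: hMB; rewrite /B; lia.
  have h1 : (2 ^ L i * `|n i| <= \sum_(i < Rn) 2 ^ L i * `|n i|)%N.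
    by rewrite (bigD1 i) //=; apply: leq_addr.
  have h2 : (2 ^ l <= 2 ^ L i)%N by rewrite leq_exp2l.
  move: hMB h1 h2; rewrite /B.
  move: (\sum_(i < Rn) 2 ^ L i * `|n i|)%N (2 ^ l)%N (2 ^ L i)%N => Sg p P.
  nia.
- move=> j.
  set a := nrm M%:Z (alpha j).
  have a0 : 0 <= a by apply: nrm_ge0.
  have ha : a <= eta by apply: hMa.
  have har : a `^ r <= eps `^ r / sz by rewrite -etar; apply: powR_mono.
  have q1 := two_powR_gt1 hr0.
  have q2 : (2 : R) `^ r <= 2 by apply: ler1_powR hr1; lra.
  set q := (2 : R) `^ r in q1 q2 *.
  set E := eps `^ r.
  have E0 : 0 <= E by apply: powR_ge0.
  set X := E / (q - 1).
  have EX : E <= X by rewrite /X ler_pdivlMr; [nra | lra].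
  have X0 : 0 <= X by lra.
  set CC := 1 + 8 * C1 ^+ 2.
  have CC0 : 0 <= CC by rewrite /CC; nra.
  have hi : forall i, \sum_(l <- index_iota 0 (L i).+1)
        nrm (M%:Z + (2 ^ l)%:Z * n i) (alpha j) `^ r
      <= 2 * (L i).+1%:R * (E / sz) + 2 * CC * X.
    move=> i; set c := nrm (n i) (alpha j).
    have c0 : 0 <= c by apply: nrm_ge0.
    have hKc : (K i)%:R * c <= C1 * eps.
      apply: le_trans (hsa j); rewrite (bigD1 i) //= lerDl.
      by apply: sumr_ge0 => i0 _; rewrite mulr_ge0 ?ler0n ?nrm_ge0.
    have hP : ((2 ^ (L i).+1)%N%:R : R) <= 8 * Rn%:R * (K i)%:R.
      have : (2 ^ (L i).+1 <= 8 * Rn * K i)%N.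
        by rewrite expnS; apply: aux8.
      by rewrite -(ler_nat R) !natrM.
    have Rn0 : (0 : R) <= Rn%:R by [].
    have hKc0 : 0 <= (K i)%:R * c by rewrite mulr_ge0 ?ler0n.
    have C8 : 0 <= 8 * C1 ^+ 2 by rewrite mulr_ge0 ?sqr_ge0.
    have hb0 : ((2 ^ (L i).+1)%N%:R * c) <= 8 * C1 ^+ 2 * eps.
      apply: le_trans (ler_wpM2r c0 hP) _.
      have -> : 8 * Rn%:R * (K i)%:R * c = (8 * Rn%:R) * ((K i)%:R * c) by ring.
      apply: le_trans (ler_wpM2r hKc0 (_ : 8 * Rn%:R <= 8 * C1)) _.
        by rewrite ler_pM2l //; lra.
      have -> : 8 * C1 ^+ 2 * eps = (8 * C1) * (C1 * eps) by ring.
      by apply: ler_wpM2l => //; lra.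
    have hb : ((2 ^ (L i).+1)%N%:R * c) `^ r <= CC * E.
      apply: le_trans (powR_mono hr0 _ hb0) _.
        by rewrite mulr_ge0 ?ler0n.
      rewrite powRM; [|exact: C8|exact: ltW].
      by apply: ler_wpM2r => //; apply: powR_le1p.
    apply: le_trans (ler_sum _ (fun l _ => powR_sum2 hr0 hr1 (nrm_ge0 _ _) a0
        (mulr_ge0 (ler0n _ (2 ^ l)) c0) (nrm_shift _ _ _ _))) _.
    rewrite -mulr_sumr big_split /= sumr_const_nat subn0.
    rewrite big_mkord.
    have := geom_powR (L i) hr0 c0.
    rewrite -/q => hg.
    have hg' : \sum_(l < (L i).+1) ((2 ^ l)%:R * c) `^ r <= CC * X.
      apply: le_trans hg _; rewrite /X mulrA ler_pM2r; [exact: hb|].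
      by rewrite invr_gt0; lra.
    have : a `^ r *+ (L i).+1 <= (L i).+1%:R * (E / sz).
      by rewrite -mulr_natl; apply: ler_wpM2l.
    lra.

  apply: le_trans (sum_undup s0 (fun x => powR_ge0 (nrm x (alpha j)) r)) _.
  rewrite big_cons big_flatten big_map.
  under eq_bigr => i0 _ do rewrite big_map.
  rewrite big_enum.
  have e1 : \sum_(i in 'I_Rn) (2 * (L i).+1%:R * (E / sz) + 2 * CC * X) =
            (sz - 1) * (E / sz) + Rn%:R * (2 * CC * X).
    rewrite big_split /= sumr_const card_ord.
    have -> : \sum_(i in 'I_Rn) 2 * (L i).+1%:R * (E / sz) = (sz - 1) * (E / sz).
      rewrite -mulr_suml; congr (_ * _).
      rewrite /sz natrD natrM natr_sum addrAC subrr add0r -mulr_sumr.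
      by congr (_ * _); apply: eq_bigl => i; rewrite inE.
    by rewrite (mulr_natl (2 * CC * X) Rn).
  apply: le_trans (lerD har (ler_sum _ (fun i _ => hi i))) _.
  rewrite e1 -/E addrA.
  have -> : E / sz + (sz - 1) * (E / sz) = E.
    by field; apply: lt0r_neq0; have := ler0n R (\sum_(i < Rn) (L i).+1)%N; lra.
  have : Rn%:R * (2 * CC * X) <= C1 * (2 * CC * X).
    by apply: ler_wpM2r hR; nra.
  nra.

- move=> beta; set d := nrmset beta (undup s0).
  have d0 : 0 <= d by apply: nrmset_ge0.
  case: (leP (1/6) d) => hd; first by rewrite ge_min hd.
  rewrite ge_min; apply/orP; right; apply: nrmset_le => // m hm.
  have hd' : forall y, y \in s0 -> nrm y beta <= d.
    by move=> y ys; apply: nrmset_ub; rewrite mem_undup.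
  have hni : forall i, distZ ((n i)%:~R * beta) <= 2 * d / (2 ^ L i)%:R.
    move=> i; apply: distZ_dyadic => // l hl.
    have e : (2 ^ l)%:R * ((n i)%:~R * beta) =
        ((M%:Z + (2 ^ l)%:Z * n i)%:~R * beta) - (M%:Z)%:~R * beta.
      rewrite intrD intrM.
      have -> : (((2 ^ l)%:Z)%:~R : R) = (2 ^ l)%:R by [].
      ring.
    rewrite e; apply: le_trans (distZB _ _) _.
    have := hd' _ (s0i i l hl); have := hd' _ s0M; rewrite /nrm; lra.
  have [k [hk ->]] := hH m hm.
  rewrite /nrm rmorph_sum /= mulr_suml.
  apply: le_trans (distZ_sum (index_enum 'I_Rn) (fun i => ((k i)%:Z * n i)%:~R * beta)) _.
  apply: (@le_trans _ _ (\sum_(i < Rn) (d / Rn%:R))).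
    apply: ler_sum => i _.
    have Rn0 : (0 < Rn)%N by apply: leq_ltn_trans (ltn_ord i).
    have Rnp : (0 : R) < Rn%:R by rewrite ltr0n.
    have Pp : (0 : R) < (2 ^ L i)%:R by rewrite ltr0n expn_gt0.
    have hP : 2 * Rn%:R * (K i)%:R <= (2 ^ L i)%:R :> R.
      by rewrite -!natrM ler_nat ltnW.
    have hk' : (k i)%:R <= (K i)%:R :> R by rewrite ler_nat; case/andP: (hk i).
    rewrite intrM -mulrA.
    apply: le_trans (distZM _ _) _.
    rewrite ger0_norm //.

    apply: le_trans (ler_wpM2l (ler0n _ _) (hni i)) _.
    rewrite ler_pdivlMr //.
    have -> : (k i)%:R * (2 * d / (2 ^ L i)%:R) * Rn%:R =
              (2 * Rn%:R * (k i)%:R * d) / (2 ^ L i)%:R.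
      by field; rewrite gt_eqF.
    rewrite ler_pdivrMr //.
    have : 2 * Rn%:R * (k i)%:R * d <= 2 * Rn%:R * (K i)%:R * d.
      by apply: ler_wpM2r => //; apply: ler_wpM2l => //; rewrite mulr_ge0 ?ler0n.
    have : 2 * Rn%:R * (K i)%:R * d <= (2 ^ L i)%:R * d by apply: ler_wpM2r.
    lra.
  rewrite sumr_const card_ord -[_ *+ Rn]mulr_natr.
  case: (posnP Rn) => [e|Rn0]; first by rewrite e mulr0.

  by rewrite divfK ?pnatr_eq0 -?lt0n.

Qed.
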